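(* Let $n\ge 2$ be an integer and define $\tau_i=-2\sin\frac{i\pi}{2n}$ for $0\le i\le n$. Let $S\in\mathbb{R}^{(n-1)\times(n-1)}$ be the matrix with columns $\bm s_1,\dots,\bm s_{n-1}$, where $\bm s_j=\big(\sin\frac{j\pi}{n},\sin\frac{2j\pi}{n},\dots,\sin\frac{(n-1)j\pi}{n}\big)^{\mathsf T}$. Let $C\in\mathbb{R}^{n\times n}$ be the matrix with columns $\bm c_0,\dots,\bm c_{n-1}$, where $\bm c_j=\nu_j\big(\cos\frac{j\pi}{2n},\cos\frac{3j\pi}{2n},\dots,\cos\frac{(2n-1)j\pi}{2n}\big)^{\mathsf T}$, with $\nu_0=\frac{1}{\sqrt2}$ and $\nu_j=1$ for $1\le j\le n-1$. Let $B\in\mathbb{R}^{(n-1)\times n}$ be the matrix with entries $B_{i,i}=-1$, $B_{i,i+1}=1$ for $1\le i\le n-1$ and all other entries $0$. Then $$S^{-1}BC=SBC^{-\mathsf T}=\Gamma,$$ where $\Gamma=[\bm 0,\Lambda]\in\mathbb{R}^{(n-1)\times n}$, $\bm 0$ is the zero column of length $n-1$, and $\Lambda=\mathrm{diag}(\tau_1,\dots,\tau_{n-1})$.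
   Context: $C^{-\mathsf T}$ denotes the inverse of the transpose of $C$. *)

(* Defs.v *)
From HB Require Import structures.
From mathcomp Require Import all_boot all_order all_algebra.
From mathcomp Require Import all_classical all_reals all_analysis.
Set Implicit Arguments. Unset Strict Implicit. Unset Printing Implicit Defensive.
Import Order.TTheory GRing.Theory Num.Theory.
Local Open Scope ring_scope.

Section Defs.
Variable R : realType.

Definition tau (n i : nat) : R := - 2 * sin (i%:R * pi / (2 * n%:R)).

(* Indices are 0-based: row/column k of the Rocq matrix is index k+1 of the paper
   for S and B (rows), and index k for the columns of C (c_0 .. c_{n-1}). *)

Definition Smx (n : nat) : 'M[R]_(n.-1) :=
  \matrix_(i, j) sin ((i.+1)%:R * (j.+1)%:R * pi / n%:R).

Definition nu (j : nat) : R := if j == 0%N then 1 / Num.sqrt 2 else 1.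

Definition Cmx (n : nat) : 'M[R]_n :=
  \matrix_(i, j) (nu j * cos ((2 * i + 1)%N%:R * (j : nat)%:R * pi / (2 * n%:R))).

Definition Bmx (n : nat) : 'M[R]_(n.-1, n) :=
  \matrix_(i, j) (if (j : nat) == i then -1 else if (j : nat) == i.+1 then 1 else 0).

Definition Gamma (n : nat) : 'M[R]_(n.-1, n) :=
  \matrix_(i, j) (if (j : nat) == i.+1 then tau n j else 0).

End Defs.

(* Main.v *)
Require Import Defs.
From HB Require Import structures.
From mathcomp Require Import all_boot all_order all_algebra.
From mathcomp Require Import all_classical all_reals all_analysis.
From mathcomp Require Import ring lra zify.
Set Implicit Arguments. Unset Strict Implicit. Unset Printing Implicit Defensive.
Import Order.TTheory GRing.Theory Num.Theory.
Local Open Scope ring_scope.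
Section Trig.
Variable R : realType.
Implicit Types u v x : R.

Lemma cos_diff u v : cos (u + v) - cos (u - v) = -2 * sin u * sin v.
Proof. rewrite cosB cosD; ring. Qed.
Lemma sin_diff u v : sin (u - v) - sin (u + v) = -2 * cos u * sin v.
Proof. rewrite sinB sinD; ring. Qed.
Lemma prod_sin u v : 2 * (sin u * sin v) = cos (u - v) - cos (u + v).
Proof. rewrite cosB cosD; ring. Qed.
Lemma prod_cos u v : 2 * (cos u * cos v) = cos (u - v) + cos (u + v).
Proof. rewrite cosB cosD; ring. Qed.

Lemma sin_natpi (m : nat) : sin (m%:R * pi) = 0 :> R.
Proof.
elim: m => [|m IH]; first by rewrite mul0r sin0.
by rewrite -addn1 natrD mulrDl mul1r sinDpi IH oppr0.
Qed.
Lemma cos_natpi (m : nat) : cos (m%:R * pi) = (-1) ^+ m :> R.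
Proof.
elim: m => [|m IH]; first by rewrite mul0r cos0 expr0.
by rewrite -addn1 natrD mulrDl mul1r cosDpi IH exprD expr1 mulrN1.
Qed.

Lemma sumD_tel (N : nat) x :
  (\sum_(k < N) cos (2 * k%:R * x)) * (2 * sin x) =
  sin ((2 * N%:R - 1) * x) + sin x.
Proof.
elim: N => [|N IH]; first by rewrite big_ord0 mul0r mulr0 sub0r mulN1r sinN addNr.
rewrite big_ord_recr /= mulrDl IH.
have -> : cos (2 * N%:R * x) * (2 * sin x) =
   sin ((2 * N%:R + 1) * x) - sin ((2 * N%:R - 1) * x).
  have -> : (2 * N%:R + 1) * x = 2 * N%:R * x + x by ring.
  have -> : (2 * N%:R - 1) * x = 2 * N%:R * x - x by ring.
  rewrite sinB sinD; ring.
rewrite (_ : (2 * N.+1%:R - 1) * x = (2 * N%:R + 1) * x :> R); last by rewrite -natr1; ring.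
ring.
Qed.

Lemma sumE_tel (N : nat) x :
  (\sum_(k < N) cos ((2 * k%:R + 1) * x)) * (2 * sin x) = sin (2 * N%:R * x).
Proof.
elim: N => [|N IH]; first by rewrite big_ord0 mul0r !mulr0 mul0r sin0.
rewrite big_ord_recr /= mulrDl IH.
have -> : cos ((2 * N%:R + 1) * x) * (2 * sin x) = sin (2 * N.+1%:R * x) - sin (2 * N%:R * x).
  have -> : 2 * N.+1%:R * x = (2 * N%:R + 1) * x + x by rewrite -natr1; ring.
  have -> : 2 * N%:R * x = (2 * N%:R + 1) * x - x by ring.
  rewrite sinB sinD; ring.
ring.
Qed.


Definition xD (n d : nat) : R := d%:R * pi / (2 * n%:R).

Lemma n_neq0 (n : nat) : (0 < n)%N -> n%:R != 0 :> R.
Proof. by move=> hn; rewrite pnatr_eq0 -lt0n. Qed.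

Lemma sin_xD (n d : nat) : (0 < d < 2 * n)%N -> 0 < sin (xD n d).
Proof.
move=> /andP [h0 h1]; apply: sin_gt0_pi.
have hn : (0 < n)%N by lia.
have pi0 := pi_gt0 R.
have hnR : (0 : R) < n%:R by rewrite ltr0n.
apply/andP; split.
  by rewrite /xD mulr_gt0 // ?mulr_gt0 ?ltr0n // invr_gt0 mulr_gt0 // ltr0n.
rewrite /xD ltr_pdivrMr ?mulr_gt0 ?ltr0n //.
rewrite mulrC ltr_pM2l //.
have : (d < 2 * n)%N by [].
rewrite -(ltr_nat R) natrM //.
Qed.

Lemma Dval (n d : nat) : (0 < d < 2 * n)%N ->
  \sum_(k < n) cos (2 * k%:R * xD n d) = (1 - (-1) ^+ d) / 2.
Proof.
move=> hd; have hs := sin_xD hd.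
have hn : (0 < n)%N by case/andP: hd => ? ?; lia.
apply: (mulIf (x := 2 * sin (xD n d))).
  by rewrite mulf_neq0 // gt_eqF.
rewrite sumD_tel.
have -> : (2 * n%:R - 1) * xD n d = d%:R * pi - xD n d.
  rewrite /xD; field; exact: n_neq0.
by rewrite sinB sin_natpi cos_natpi; field.
Qed.

Lemma Eval (n d : nat) : (0 < d < 2 * n)%N ->
  \sum_(k < n) cos ((2 * k%:R + 1) * xD n d) = 0.
Proof.
move=> hd; have hs := sin_xD hd.
have hn : (0 < n)%N by case/andP: hd => ? ?; lia.
apply: (mulIf (x := 2 * sin (xD n d))).
  by rewrite mulf_neq0 // gt_eqF.
rewrite sumE_tel mul0r.
have -> : 2 * n%:R * xD n d = d%:R * pi.
  rewrite /xD; field; exact: n_neq0.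
by rewrite sin_natpi.
Qed.

Lemma xD0 n : xD n 0 = 0.
Proof. by rewrite /xD !mul0r. Qed.

Lemma cosdist (p q : nat) y :
  cos ((p%:R - q%:R) * y) = cos (((p - q) + (q - p))%N%:R * y) :> R.
Proof.
case: (leqP p q) => h.
  have -> : (p - q = 0)%N by apply/eqP; rewrite subn_eq0.
  by rewrite add0n natrB // -cosN -mulNr opprB.
have -> : (q - p = 0)%N by apply/eqP; rewrite subn_eq0 ltnW.
by rewrite addn0 natrB // ltnW.
Qed.

End Trig.
Section M.
Variable R : realType.

Lemma sum_sel (N j : nat) (f : nat -> R) : (j < N)%N ->
  \sum_(k < N) ((k : nat) == j)%:R * f k = f j.
Proof.
move=> hj; rewrite (bigD1 (Ordinal hj)) //= eqxx mul1r big1 ?addr0 //.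
move=> k hk; rewrite (_ : ((k : nat) == j) = false) ?mul0r //.
apply/negbTE; apply: contra hk => /eqP h; apply/eqP/val_inj => /=; exact: h.
Qed.

Lemma two_neq0 : (2 : R) != 0.
Proof. by rewrite pnatr_eq0. Qed.

Lemma odd_dist (p q : nat) : odd (p - q + (q - p)) = odd (p + q).
Proof.
case: (leqP p q) => h.
  rewrite (_ : (p - q = 0)%N); last by apply/eqP; rewrite subn_eq0.
  by rewrite add0n oddB // oddD addbC.
rewrite (_ : (q - p = 0)%N); last by apply/eqP; rewrite subn_eq0 ltnW.
by rewrite addn0 oddB ?oddD // ltnW.
Qed.

Lemma SS (m : nat) : (0 < m)%N -> Smx R m.+1 *m Smx R m.+1 = (m.+1%:R / 2)%:M.
Proof.
move=> hm; set n := m.+1.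
apply/matrixP => a b; rewrite !mxE.
under eq_bigr do rewrite !mxE.
apply: (mulIf two_neq0); rewrite mulr_suml.
pose d := (a.+1 - b.+1 + (b.+1 - a.+1))%N.
pose s := (a.+1 + b.+1)%N.
pose f k := cos (2 * k%:R * xD R n d) - cos (2 * k%:R * xD R n s).
rewrite (eq_bigr (fun k : 'I_m => f k.+1)); last first.
  move=> k _; rewrite mulrC prod_sin /f.
  transitivity (cos ((a.+1%:R - b.+1%:R) * (k.+1%:R * (pi : R) / n%:R)) -
                cos (s%:R * (k.+1%:R * (pi : R) / n%:R))).
    by congr (cos _ - cos _); rewrite /s; ring.
  have hn : n%:R != 0 :> R by rewrite pnatr_eq0.
  rewrite cosdist -/d; congr (cos _ - cos _); rewrite /xD; field; exact: hn.
have -> : \sum_(k < m) f k.+1 = \sum_(k < n) f k.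
  by rewrite big_ord_recl /f !mulr0 !mul0r subrr add0r.
rewrite sumrB.
have ha : (a < m)%N := ltn_ord a.
have hb : (b < m)%N := ltn_ord b.
have hs : (0 < s < 2 * n)%N.
  move: ha hb; rewrite /s /n; lia.
rewrite (Dval R hs).
case: (eqVneq a b) => [eab|hab].
  rewrite mulr1n.
  have -> : d = 0%N by rewrite /d -eab subnn.
  rewrite xD0; under eq_bigr do rewrite mulr0 cos0.
  rewrite sumr_const card_ord -signr_odd /s -eab addnn odd_double expr0.
  have hn : n%:R != 0 :> R by rewrite pnatr_eq0.
  by field.
have hab' : (a : nat) != b by [].
have hd : (0 < d < 2 * n)%N.
  move: ha hb hab'; rewrite /d /n neq_ltn => ha' hb' /orP [] h; lia.
rewrite (Dval R hd) -(signr_odd _ d) -(signr_odd _ s) /d /s odd_dist.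
by rewrite mulr0n mul0r; ring.
Qed.


Lemma E0 (n : nat) : \sum_(k < n) cos ((2 * k%:R + 1) * xD R n 0) = n%:R.
Proof.
rewrite xD0; under eq_bigr do rewrite mulr0 cos0.
by rewrite sumr_const card_ord.
Qed.

Lemma CC (m : nat) : (Cmx R m.+1)^T *m Cmx R m.+1 = (m.+1%:R / 2)%:M.
Proof.
set n := m.+1.
apply/matrixP => a b; rewrite !mxE.
under eq_bigr do rewrite !mxE.
apply: (mulIf two_neq0); rewrite mulr_suml.
pose d := (a - b + (b - a))%N.
pose s := (a + b)%N.
pose g k := cos ((2 * k%:R + 1) * xD R n d) + cos ((2 * k%:R + 1) * xD R n s).
have hn : n%:R != 0 :> R by rewrite pnatr_eq0.
rewrite (eq_bigr (fun k : 'I_n => nu R a * nu R b * g k)); last first.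
  move=> k _.
  rewrite (_ : forall x y u v : R, x * u * (y * v) * 2 = x * y * (2 * (u * v)));
    last by move=> *; ring.
  rewrite prod_cos /g.
  transitivity (nu R a * nu R b * (cos ((a%:R - b%:R) * ((2 * k%:R + 1) * (pi : R) / (2 * n%:R))) +
                cos (s%:R * ((2 * k%:R + 1) * (pi : R) / (2 * n%:R))))).
    by congr (_ * (cos _ + cos _)); rewrite /s; ring.
  rewrite cosdist -/d; congr (_ * (cos _ + cos _)); rewrite /xD; field; exact: hn.
rewrite -mulr_sumr big_split /=.
have ha : (a < n)%N := ltn_ord a.
have hb : (b < n)%N := ltn_ord b.
case: (eqVneq a b) => [eab|hab].
  rewrite mulr1n.
  have -> : d = 0%N by rewrite /d -eab subnn.
  rewrite E0.
  have hs2 : Num.sqrt 2 * Num.sqrt 2 = 2 :> R by rewrite -expr2 sqr_sqrtr // ler0n.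
  case: (posnP a) => [a0|a0].
    have -> : s = 0%N by rewrite /s -eab a0.
    rewrite E0 -eab a0 /nu eqxx !div1r -invfM hs2.
    by field.
  have hs : (0 < s < 2 * n)%N by move: ha hb a0; rewrite /s -eab /n; lia.
  rewrite (Eval R hs) -eab /nu (negbTE (lt0n_neq0 a0)).
  by field.
have hab' : (a : nat) != b by [].
have hd : (0 < d < 2 * n)%N.
  move: ha hb hab'; rewrite /d /n neq_ltn => ha' hb' /orP [] h; lia.
have hs : (0 < s < 2 * n)%N.
  move: ha hb hab'; rewrite /s /n neq_ltn => ha' hb' /orP [] h; lia.
by rewrite (Eval R hd) (Eval R hs) mulr0n mul0r addr0 mulr0.
Qed.


Lemma Bif (j i : nat) :
  (if j == i then -1 else if j == i.+1 then 1 else 0) =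
  ((j == i.+1)%:R - (j == i)%:R :> R).
Proof.
case: (eqVneq j i) => [e|h].
  by rewrite e (ltn_eqF (ltnSn i)) sub0r.
case: (eqVneq j i.+1) => [e2|h2].
  by rewrite subr0.
by rewrite subrr.
Qed.

Lemma sum_if (N l : nat) (F : nat -> R) (t : R) : (l < N.+1)%N ->
  \sum_(k < N) F k * (if l == k.+1 then t else 0) =
  if l == 0%N then 0 else F l.-1 * t.
Proof.
case: l => [|l] hl /=.
  by rewrite big1 // => k _; rewrite mulr0.
transitivity (\sum_(k < N) ((k : nat) == l)%:R * (F k * t)).
  by apply: eq_bigr => k _; rewrite eqSS eq_sym; case: eqP; rewrite ?mulr0 ?mul1r ?mul0r.
by rewrite (sum_sel (fun k => F k * t)).
Qed.

Lemma sum_if2 (N p : nat) (F t : nat -> R) : (p < N)%N ->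
  \sum_(k < N) (if (k : nat) == p then t k else 0) * F k = t p * F p.
Proof.
move=> hp.
transitivity (\sum_(k < N) ((k : nat) == p)%:R * (t k * F k)).
  by apply: eq_bigr => k _; case: eqP; rewrite ?mul0r ?mul1r.
by rewrite (sum_sel (fun k => t k * F k)).
Qed.


Lemma BC (m : nat) : (0 < m)%N ->
  Bmx R m.+1 *m Cmx R m.+1 = Smx R m.+1 *m Gamma R m.+1.
Proof.
move=> hm; set n := m.+1.
have hn : n%:R != 0 :> R by rewrite pnatr_eq0.
apply/matrixP => i l; rewrite !mxE.
under eq_bigr do rewrite !mxE Bif mulrBl.
under [RHS]eq_bigr do rewrite !mxE.
have hi : (i < m)%N := ltn_ord i.
have hl : (l < n)%N := ltn_ord l.
rewrite sumrB.
rewrite (sum_sel (fun j : nat => nu R l * cos ((2 * j + 1)%N%:R * l%:R * pi / (2 * n%:R)))) //.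
rewrite (sum_sel (fun j : nat => nu R l * cos ((2 * j + 1)%N%:R * l%:R * pi / (2 * n%:R)))) //; last by lia.
rewrite (sum_if (fun k : nat => sin (i.+1%:R * k.+1%:R * pi / n%:R)) (tau R n l)) //.
case: (posnP l) => [l0|l0].
  by rewrite l0 /= !mulr0 !mul0r subrr.
rewrite /nu (negbTE (lt0n_neq0 l0)) !mul1r prednK // /tau.
pose u : R := i.+1%:R * l%:R * pi / n%:R.
pose v : R := l%:R * pi / (2 * n%:R).
transitivity (cos (u + v) - cos (u - v)).
  congr (cos _ - cos _); rewrite /u /v; field; exact: hn.
rewrite cos_diff /u /v; ring.
Qed.


Lemma SB (m : nat) : (0 < m)%N ->
  Smx R m.+1 *m Bmx R m.+1 = Gamma R m.+1 *m (Cmx R m.+1)^T.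
Proof.
move=> hm; set n := m.+1.
have hn : n%:R != 0 :> R by rewrite pnatr_eq0.
apply/matrixP => i j; rewrite !mxE.
under eq_bigr do rewrite !mxE Bif mulrBr.
under [RHS]eq_bigr do rewrite !mxE.
have hi : (i < m)%N := ltn_ord i.
have hj : (j < n)%N := ltn_ord j.
pose s' (k : nat) : R := sin (i.+1%:R * k%:R * pi / n%:R).
rewrite sumrB.
have e1 : \sum_(k < m) sin (i.+1%:R * k.+1%:R * pi / n%:R) * ((j : nat) == k.+1)%:R = s' j.
  rewrite -(sum_sel s' hj) big_ord_recl /= /s' mulr0 !mul0r sin0 mulr0 add0r.
  by apply: eq_bigr => k _; rewrite /bump /= add1n eq_sym mulrC.
have e2 : \sum_(k < m) sin (i.+1%:R * k.+1%:R * pi / n%:R) * ((j : nat) == k)%:R = s' j.+1.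
  rewrite -(sum_sel (fun k => s' k.+1) hj) big_ord_recr /= /s'.
  have -> : i.+1%:R * m.+1%:R * pi / n%:R = i.+1%:R * pi :> R.
    by rewrite /n; field; rewrite addrC natr1 pnatr_eq0.
  rewrite (sin_natpi R i.+1) mulr0 addr0.
  by apply: eq_bigr => k _; rewrite eq_sym mulrC.
rewrite e1 e2.
rewrite (sum_if2 (fun k : nat => nu R k * cos ((2 * j + 1)%N%:R * k%:R * pi / (2 * n%:R))) (fun k => tau R n k)) //.
rewrite /nu /= mul1r /tau /s'.
pose u : R := (2 * j + 1)%N%:R * i.+1%:R * pi / (2 * n%:R).
pose v : R := i.+1%:R * pi / (2 * n%:R).
transitivity (sin (u - v) - sin (u + v)).
  congr (sin _ - sin _); rewrite /u /v; field; exact: hn.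
rewrite sin_diff /u /v; ring.
Qed.

End M.

Theorem lemma2p1 (R : realType) (n : nat) (hn : (2 <= n)%N) :
  invmx (Smx R n) *m Bmx R n *m Cmx R n = Gamma R n /\
  Smx R n *m Bmx R n *m invmx (Cmx R n)^T = Gamma R n.
Proof.
case: n hn => [//|m] hm.
have hm0 : (0 < m)%N by [].
have hn : m.+1%:R != 0 :> R by rewrite pnatr_eq0.
have key : (2 / m.+1%:R) *: (m.+1%:R / 2)%:M = 1%:M :> 'M[R]_m.
  rewrite scale_scalar_mx; congr (_%:M); field; by rewrite addrC natr1 pnatr_eq0.
have key' : (2 / m.+1%:R) *: (m.+1%:R / 2)%:M = 1%:M :> 'M[R]_m.+1.
  rewrite scale_scalar_mx; congr (_%:M); field; by rewrite addrC natr1 pnatr_eq0.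
have Su : Smx R m.+1 \in unitmx.
  have [] // := @mulmx1_unit R m (Smx R m.+1) ((2 / m.+1%:R) *: Smx R m.+1).
  by rewrite -scalemxAr SS.
have Cu : (Cmx R m.+1)^T \in unitmx.
  have [] // := @mulmx1_unit R m.+1 (Cmx R m.+1)^T ((2 / m.+1%:R) *: Cmx R m.+1).
  by rewrite -scalemxAr CC.
split.
  by rewrite -mulmxA BC // mulKmx.
by rewrite SB // mulmxK.
Qed.
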